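(* Let ${\mathbf{x}}^* \in \mathbb{R}^n$, ${\mathbf{x}}^* \geq 0$, with $\mathcal{J} = \mathrm{supp}({\mathbf{x}}^* )$, and assume there is a vector ${\mathbf{c}}$ with $$\frac{P {\mathbf{e}}_j}{\| P {\mathbf{e}}_j \|_2} \cdot {\mathbf{c}} = 1 \ \ \forall j \in \mathcal{J}, \qquad \frac{P {\mathbf{e}}_i}{\| P {\mathbf{e}}_i \|_2} \cdot {\mathbf{c}} < 1 \ \ \forall i \in \mathcal{J}^c.$$ Let $s \in [\|{\mathbf{x}}^*\|_\infty, \infty]$. If $A$ is injective on the set $\{ {\mathbf{z}} \in \mathbb{R}^n : \mathrm{supp}({\mathbf{z}}) \subseteq \mathcal{J},\ 0 \leq {\mathbf{z}} \leq s \}$, then ${\mathbf{x}}^*$ is the unique solution of $$\min_{0 \leq {\mathbf{x}} \leq s} \| W {\mathbf{x}} \|_1 \quad \text{subject to} \quad A {\mathbf{x}} = A {\mathbf{x}}^*.$$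
   Context: $A \in \mathbb{R}^{m\times n}$ is a matrix, $A^\dagger$ its Moore–Penrose pseudoinverse, and $P = A^\dagger A$ the orthogonal projection onto $\mathcal{N}(A)^\perp$. ${\mathbf{e}}_1,\dots,{\mathbf{e}}_n$ are the standard unit vectors, assumed not to lie in $\mathcal{N}(A)$, so $w_i := \|P{\mathbf{e}}_i\|_2 > 0$; $W = \mathrm{diag}(w_1,\dots,w_n)$. Inequalities between vectors and scalars are componentwise; $s=\infty$ means only the constraint ${\mathbf{x}}\ge 0$. *)

(* Defs.v *)
From HB Require Import structures.
From mathcomp Require Import all_boot all_order all_algebra.
From mathcomp Require Import reals.
Set Implicit Arguments. Unset Strict Implicit. Unset Printing Implicit Defensive.
Import Order.TTheory GRing.Theory Num.Theory.
Local Open Scope ring_scope.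

(* Moore–Penrose pseudoinverse, characterized by the four Penrose equations
   (which determine it uniquely). *)
Definition is_MP_pinv (R : realType) (m n : nat)
    (A : 'M[R]_(m, n)) (X : 'M[R]_(n, m)) : Prop :=
  [/\ A *m X *m A = A, X *m A *m X = X,
      (A *m X)^T = A *m X & (X *m A)^T = X *m A].

Definition norm2 (R : realType) (n : nat) (v : 'cV[R]_n) : R :=
  Num.sqrt (\sum_(k < n) v k 0 ^+ 2).

Definition dotv (R : realType) (n : nat) (u v : 'cV[R]_n) : R :=
  \sum_(k < n) u k 0 * v k 0.

Definition unitv (R : realType) (n : nat) (i : 'I_n) : 'cV[R]_n :=
  \col_(k < n) (if k == i then 1 else 0).

Definition wt (R : realType) (n : nat) (P : 'M[R]_n) (i : 'I_n) : R :=
  norm2 (P *m unitv R i).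

Definition supp (R : realType) (n : nat) (x : 'cV[R]_n) : {set 'I_n} :=
  [set i | x i 0 != 0].

(* Box constraint 0 <= x <= s; s = None encodes s = +infinity
   (only the constraint x >= 0). *)
Definition in_box (R : realType) (n : nat) (s : option R) (x : 'cV[R]_n) : Prop :=
  forall i : 'I_n, 0 <= x i 0 /\ (if s is Some t then x i 0 <= t else True).

Definition wl1 (R : realType) (n : nat) (P : 'M[R]_n) (x : 'cV[R]_n) : R :=
  \sum_(i < n) `| wt P i * x i 0 |.

(* Main.v *)
Require Import Defs.
From HB Require Import structures.
From mathcomp Require Import all_boot all_order all_algebra.
From mathcomp Require Import reals.
Import Order.TTheory GRing.Theory Num.Theory.
Local Open Scope ring_scope.

Lemma norm2_gt0 (R : realType) n (v : 'cV[R]_n) : v != 0 -> 0 < norm2 v.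
Proof.
move=> nz; rewrite /norm2 sqrtr_gt0.
have [k hk] : exists k, v k 0 != 0.
  apply/existsP; apply: contraR nz; rewrite negb_exists => /forallP H.
  apply/eqP/matrixP => i j; rewrite (ord1 j) mxE; exact/eqP/negPn/H.
rewrite (bigD1 k) //=; apply: ltr_pwDl.
  by rewrite lt_def sqrf_eq0 hk sqr_ge0.
by apply: sumr_ge0 => i _; rewrite sqr_ge0.
Qed.

Lemma Pe_entry (R : realType) n (P : 'M[R]_n) i k :
  (P *m unitv R i) k 0 = P k i.
Proof.
rewrite mxE (bigD1 i) //= big1 ?addr0; first by rewrite mxE eqxx mulr1.
by move=> l /negbTE hl; rewrite mxE hl mulr0.
Qed.

Lemma key (R : realType) n (P : 'M[R]_n) (c x : 'cV[R]_n) :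
  \sum_i x i 0 * dotv (P *m unitv R i) c = \sum_k (P *m x) k 0 * c k 0.
Proof.
rewrite /dotv.
under eq_bigr => i _ do rewrite big_distrr /=.
rewrite exchange_big /=; apply: eq_bigr => k _.
rewrite mxE big_distrl /=; apply: eq_bigr => i _.
by rewrite Pe_entry mulrA [x i 0 * _]mulrC.
Qed.

Theorem corollary1 (R : realType) (m n : nat)
    (A : 'M[R]_(m, n)) (Adag : 'M[R]_(n, m))
    (xs c : 'cV[R]_n) (s : option R) :
  is_MP_pinv A Adag ->
  (* e_i not in N(A) for all i *)
  (forall i : 'I_n, A *m unitv R i != 0) ->
  (forall i : 'I_n, 0 <= xs i 0) ->
  (forall j : 'I_n, j \in supp xs ->
     dotv ((wt (Adag *m A) j)^-1 *: ((Adag *m A) *m unitv R j)) c = 1) ->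
  (forall i : 'I_n, i \notin supp xs ->
     dotv ((wt (Adag *m A) i)^-1 *: ((Adag *m A) *m unitv R i)) c < 1) ->
  (* s in [ ||xs||_oo , oo ] *)
  (forall t : R, s = Some t -> forall i : 'I_n, `| xs i 0 | <= t) ->
  (* A injective on { z : supp z \subset J, 0 <= z <= s } *)
  (forall z1 z2 : 'cV[R]_n,
     supp z1 \subset supp xs -> in_box s z1 ->
     supp z2 \subset supp xs -> in_box s z2 ->
     A *m z1 = A *m z2 -> z1 = z2) ->
  (* xs is the unique minimizer *)
  in_box s xs /\
  (forall x : 'cV[R]_n, in_box s x -> A *m x = A *m xs -> x != xs ->
     wl1 (Adag *m A) xs < wl1 (Adag *m A) x).
Proof.
move=> [hAXA _ _ _] hnz hxs0 hJ hJc hs hinj.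
set P := Adag *m A.
have boxxs : in_box s xs.
  move=> i; split => //; destruct s as [t|] eqn:Es => //.
  by apply: le_trans (hs t erefl i); exact: ler_norm.
split => // x bx hAx hne.
set q := fun i => dotv (P *m unitv R i) c.
have wpos : forall i, 0 < wt P i.
  move=> i; apply: norm2_gt0; apply: contraNneq (hnz i) => h.
  have -> : A *m unitv R i = A *m (P *m unitv R i) by rewrite /P !mulmxA hAXA.
  by rewrite h mulmx0.
have hd : forall i, dotv ((wt P i)^-1 *: (P *m unitv R i)) c = (wt P i)^-1 * q i.
  move=> i; rewrite /q /dotv big_distrr /=; apply: eq_bigr => k _.
  by rewrite mxE mulrA.
have qJ : forall j, j \in supp xs -> q j = wt P j.
  move=> j hj; have := hJ j hj; rewrite hd => h.
  have w0 : wt P j != 0 by rewrite gt_eqF.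
  by apply: (mulfI (invr_neq0 w0)); rewrite h mulVf.
have qJc : forall i, i \notin supp xs -> q i < wt P i.
  move=> i hi; have := hJc i hi; rewrite hd.
  by rewrite ltr_pdivrMl // mulr1.
have hPx : P *m x = P *m xs by rewrite /P -!mulmxA hAx.
have wxs : wl1 P xs = \sum_i xs i 0 * q i.
  rewrite /wl1; apply: eq_bigr => i _.
  case: (boolP (i \in supp xs)) => hi.
    rewrite qJ // ger0_norm; first exact: mulrC.
    by apply: mulr_ge0; [exact: ltW|exact: hxs0].
  move: hi; rewrite inE negbK => /eqP ->.
  by rewrite mulr0 mul0r normr0.
have wx : wl1 P x = \sum_i x i 0 * wt P i.
  rewrite /wl1; apply: eq_bigr => i _.
  rewrite ger0_norm; first exact: mulrC.
  by apply: mulr_ge0; [exact: ltW|exact: (bx i).1].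
have eqs : \sum_(i < n) xs i 0 * q i = \sum_(i < n) x i 0 * q i :> R.
  have e1 := @key R n P c xs; have e2 := @key R n P c x; rewrite hPx in e2.
  exact: etrans e1 (esym e2).
rewrite ltNge; apply/negP => hle.
have hdiff : \sum_(i < n) x i 0 * (wt P i - q i) = 0 :> R.
  apply/eqP; rewrite eq_le; apply/andP; split.
    rewrite (eq_bigr (fun i => x i 0 * wt P i - x i 0 * q i)); last by move=> i _; rewrite mulrBr.
    by rewrite sumrB -wx -eqs -wxs subr_le0.
  apply: sumr_ge0 => i _; apply: mulr_ge0; first exact: (bx i).1.
  case: (boolP (i \in supp xs)) => hi; first by rewrite qJ // subrr.
  by rewrite subr_ge0 ltW // qJc.
have ge : forall i, true -> 0 <= x i 0 * (wt P i - q i).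
  move=> i _; apply: mulr_ge0; first exact: (bx i).1.
  case: (boolP (i \in supp xs)) => hi; first by rewrite qJ // subrr.
  by rewrite subr_ge0 ltW // qJc.
have hsub : supp x \subset supp xs.
  apply/subsetP => i; rewrite [i \in supp x]inE => hx; apply/negPn/negP => hi.
  have /eqP := psumr_eq0P ge hdiff (i:=i) isT; rewrite mulf_eq0 (negbTE hx) /=.
  by rewrite subr_eq0 gt_eqF // qJc.
by move/eqP: hne; apply; apply: hinj.
Qed.
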